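(* Let $\langle B,\wedge,{}'\rangle$ be an algebra with $\wedge$ binary and ${}'$ unary satisfying $x\wedge(y\wedge z)\approx y\wedge(z\wedge x)$ and $x\approx (x'\wedge y)'\wedge(x'\wedge y')'$. Then $x''=x$ for all $x\in B$. *)


Theorem lemma4p24 (B : Type) (meet : B -> B -> B) (c : B -> B)
  (Hcyc : forall x y z : B, meet x (meet y z) = meet y (meet z x))
  (Hax : forall x y : B, x = meet (c (meet (c x) y)) (c (meet (c x) (c y)))) :
  forall x : B, c (c x) = x.
Proof.
  intros a.
  assert (E3 : forall V0 V1 : B, (meet (c (meet (c V0) V1)) (c (meet (c V0) (c V1)))) = V0).
  { intros V0 V1. pose proof (Hax V0 V1) as H0. congruence. }
  assert (E2 : forall V0 V1 V2 : B, (meet V0 (meet V1 V2)) = (meet V1 (meet V2 V0))).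
  { intros V0 V1 V2. pose proof (Hcyc V0 V1 V2) as H0. congruence. }
  assert (E6 : forall V0 V1 V2 : B, (meet (c (meet (c V0) V1)) (meet (c (meet (c V0) (c V1))) V2)) = (meet V2 V0)).
  { intros V0 V1 V2. pose proof (E2 V2 (c (meet (c V0) V1)) (c (meet (c V0) (c V1)))) as H0. pose proof (E3 V0 V1) as H1. congruence. }
  assert (E25 : forall V0 V1 V2 V3 : B, (meet (c (meet (c V0) V1)) (meet V2 (meet V3 (c (meet (c V0) (c V1)))))) = (meet (meet V2 V3) V0)).
  { intros V0 V1 V2 V3. pose proof (E6 V0 V1 (meet V2 V3)) as H0. pose proof (E2 (c (meet (c V0) (c V1))) V2 V3) as H1. congruence. }
  assert (E27 : forall V0 V1 V2 : B, (meet (meet (c (meet (c V0) (c V1))) V2) V0) = (meet (meet V2 (c (meet (c V0) (c V1)))) V0)).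
  { intros V0 V1 V2. pose proof (E25 V0 V1 (c (meet (c V0) (c V1))) V2) as H0. pose proof (E6 V0 V1 (meet V2 (c (meet (c V0) (c V1))))) as H1. congruence. }
  assert (E26 : forall V0 V1 V2 : B, (meet (meet V0 (c (meet (c V1) V2))) V1) = (meet V1 (meet (c (meet (c V1) V2)) V0))).
  { intros V0 V1 V2. pose proof (E25 V1 V2 V0 (c (meet (c V1) V2))) as H0. pose proof (E3 V1 V2) as H1. pose proof (E2 V1 (c (meet (c V1) V2)) V0) as H2. congruence. }
  assert (E29 : forall V0 V1 V2 : B, (meet (meet (c (meet (c V0) (c V1))) V2) V0) = (meet V0 (meet (c (meet (c V0) (c V1))) V2))).
  { intros V0 V1 V2. pose proof (E27 V0 V1 V2) as H0. pose proof (E26 V2 V0 (c V1)) as H1. congruence. }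
  assert (E16 : forall V0 V1 : B, (meet (c V0) (c (meet (c (meet (c V0) V1)) (c (c (meet (c V0) (c V1))))))) = (meet (c V0) V1)).
  { intros V0 V1. pose proof (E3 (meet (c V0) V1) (c (meet (c V0) (c V1)))) as H0. pose proof (E3 V0 V1) as H1. congruence. }
  assert (E35 : forall V0 V1 V2 : B, (meet (meet (c (meet (c V0) V1)) V2) V0) = (meet V0 (meet (c (meet (c V0) V1)) V2))).
  { intros V0 V1 V2. pose proof (E29 V0 (meet (c (meet (c V0) V1)) (c (c (meet (c V0) (c V1))))) V2) as H0. pose proof (E16 V0 V1) as H1. pose proof (E16 V0 V1) as H2. congruence. }
  assert (E5 : forall V0 V1 V2 : B, (meet (c (meet V0 (meet (c V1) V2))) (c (meet (c V1) (c (meet V2 V0))))) = V1).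
  { intros V0 V1 V2. pose proof (E3 V1 (meet V2 V0)) as H0. pose proof (E2 V0 (c V1) V2) as H1. congruence. }
  assert (E36 : forall V0 V1 : B, (meet V0 V1) = (meet V1 V0)).
  { intros V0 V1. pose proof (E35 V0 (meet (c V1) a) (c (meet (c V1) (c (meet a (c V0)))))) as H0. pose proof (E5 (c V0) V1 a) as H1. pose proof (E5 (c V0) V1 a) as H2. congruence. }
  assert (E38 : forall V0 V1 : B, (meet (c (meet (c V0) V1)) (c (meet (c V1) (c V0)))) = V0).
  { intros V0 V1. pose proof (E3 V0 V1) as H0. pose proof (E36 (c V0) (c V1)) as H1. congruence. }
  assert (E50 : forall V0 V1 V2 : B, (meet (c (meet (c V0) V1)) (meet V2 (c (meet (c V0) (c V1))))) = (meet V2 V0)).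
  { intros V0 V1 V2. pose proof (E6 V0 V1 V2) as H0. pose proof (E36 (c (meet (c V0) (c V1))) V2) as H1. congruence. }
  assert (E7 : forall V0 V1 : B, (meet (c (meet (c V0) (c (c V1)))) V0) = (meet (c (meet (c V0) V1)) V0)).
  { intros V0 V1. pose proof (E6 V0 V1 (c (meet (c V0) (c (c V1))))) as H0. pose proof (E3 V0 (c V1)) as H1. congruence. }
  assert (E30 : forall V0 V1 : B, (meet (meet V0 V1) V1) = (meet V1 (meet V0 V1))).
  { intros V0 V1. pose proof (E29 V1 a (meet (c (meet (c V1) (c (c a)))) V0)) as H0. pose proof (E6 V1 (c a) V0) as H1. pose proof (E6 V1 (c a) V0) as H2. congruence. }
  assert (E9 : forall V0 V1 : B, (meet (c (meet (c V0) (meet (c V1) (c (meet (c V0) V1))))) (c V0)) = (meet (c V0) V1)).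
  { intros V0 V1. pose proof (E3 (meet (c V0) V1) (meet (c V0) (c V1))) as H0. pose proof (E3 V0 V1) as H1. pose proof (E2 (c (meet (c V0) V1)) (c V0) (c V1)) as H2. congruence. }
  assert (E31 : forall V0 V1 : B, (meet (meet (c V0) V1) (c V0)) = (meet (c V0) (meet (c V0) V1))).
  { intros V0 V1. pose proof (E30 (c (meet (c V0) (meet (c V1) (c (meet (c V0) V1))))) (c V0)) as H0. pose proof (E9 V0 V1) as H1. pose proof (E9 V0 V1) as H2. congruence. }
  assert (E32 : forall V0 V1 : B, (meet (c (meet (c V0) V1)) V0) = (meet V0 (c (meet (c V0) V1)))).
  { intros V0 V1. pose proof (E31 (meet (c V0) V1) (c (meet (c V0) (c V1)))) as H0. pose proof (E3 V0 V1) as H1. pose proof (E3 V0 V1) as H2. congruence. }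
  assert (E33 : forall V0 V1 : B, (meet V0 (c (meet (c V0) (c (c V1))))) = (meet V0 (c (meet (c V0) V1)))).
  { intros V0 V1. pose proof (E7 V0 V1) as H0. pose proof (E32 V0 (c (c V1))) as H1. pose proof (E32 V0 V1) as H2. congruence. }
  assert (E40 : forall V0 V1 : B, (meet V0 (c (meet (c (c V1)) (c V0)))) = (meet V0 (c (meet (c V0) V1)))).
  { intros V0 V1. pose proof (E33 V0 V1) as H0. pose proof (E36 (c V0) (c (c V1))) as H1. congruence. }
  assert (E92 : forall V0 V1 : B, (meet V0 (meet (c (meet (c V0) V1)) (c (meet (c (c V1)) V0)))) = (meet V0 (c V1))).
  { intros V0 V1. pose proof (E50 (c V1) V0 V0) as H0. pose proof (E40 V0 V1) as H1. pose proof (E2 (c (meet (c (c V1)) V0)) V0 (c (meet (c V0) V1))) as H2. congruence. }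
  assert (E37 : forall V0 V1 : B, (meet (c (meet V0 (c V1))) (c (meet (c V1) (c V0)))) = V1).
  { intros V0 V1. pose proof (E3 V1 V0) as H0. pose proof (E36 (c V1) V0) as H1. congruence. }
  assert (E39 : forall V0 V1 : B, (meet (c (meet V0 (c V1))) (c (meet (c V0) (c V1)))) = V1).
  { intros V0 V1. pose proof (E37 V0 V1) as H0. pose proof (E36 (c V1) (c V0)) as H1. congruence. }
  assert (E93 : forall V0 : B, (meet (c V0) (c (c V0))) = (meet V0 (c V0))).
  { intros V0. pose proof (E92 (c V0) (c V0)) as H0. pose proof (E39 (c (c V0)) V0) as H1. pose proof (E36 (c V0) V0) as H2. congruence. }
  assert (E95 : forall V0 : B, (meet (c (meet V0 (c V0))) (c (meet V0 (c (c V0))))) = (c V0)).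
  { intros V0. pose proof (E38 (c V0) V0) as H0. pose proof (E93 V0) as H1. pose proof (E36 (c (c V0)) V0) as H2. pose proof (E36 (c (meet V0 (c (c V0)))) (c (meet V0 (c V0)))) as H3. congruence. }
  assert (E96 : forall V0 : B, (c (c V0)) = V0).
  { intros V0. pose proof (E95 (c V0)) as H0. pose proof (E3 V0 (c (c V0))) as H1. congruence. }
  pose proof (E96 a) as H0. congruence.
Qed.
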